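(* Consider a discounted Markov decision problem as described in the context, with discount factor $\gamma\in(0,1)$, and let $\rho\in\Delta(\mathcal{S})$. Let $\pi^{(0)}\in\Pi$ be arbitrary and consider the projected policy gradient method \[ \pi^{(k+1)}=\mathrm{proj}_{\Pi}\bigl(\pi^{(k)}-\eta_k\nabla V_\rho(\pi^{(k)})\bigr),\qquad k\ge 0, \] with constant step size $\eta_k=\frac{(1-\gamma)^3}{2\gamma|\mathcal{A}|}$ for all $k\ge0$ (i.e., the gradient is evaluated with the same distribution $\mu=\rho$ as the one used to measure performance). Then for all $k\ge1$, \[ V_\rho(\pi^{(k)})-V_\rho^\star\;\le\;\frac{128\,|\mathcal{S}|\,|\mathcal{A}|}{k\,(1-\gamma)^5}\left\|\frac{d_\rho(\pi^\star)}{\rho}\right\|_\infty^2 . \]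
   Context: A discounted Markov decision problem (in cost-minimization form) consists of a finite state set $\mathcal{S}$, a finite action set $\mathcal{A}$, transition probabilities $P(s'|s,a)$, a cost function $R:\mathcal{S}\times\mathcal{A}\to[0,1]$ (written $R_{s,a}$), and a discount factor $\gamma$. The set of (stationary randomized) policies is $\Pi=\Delta(\mathcal{A})^{|\mathcal{S}|}$, i.e. $\pi=(\pi_s)_{s\in\mathcal{S}}$ with $\pi_s$ a probability vector on $\mathcal{A}$ and $\pi_{s,a}$ the probability of action $a$ at state $s$; $\Pi$ is regarded as a subset of $\mathbf{R}^{|\mathcal{S}|\times|\mathcal{A}|}$. For $\pi\in\Pi$, $V_s(\pi)=\mathbf{E}\bigl[\sum_{t\ge0}\gamma^tR(s_t,a_t)\mid s_0=s\bigr]$ where $a_t\sim\pi_{s_t}$ and $s_{t+1}\sim P(\cdot|s_t,a_t)$; for $\rho\in\Delta(\mathcal{S})$, $V_\rho(\pi)=\sum_s\rho_sV_s(\pi)$ and $V_\rho^\star=\min_{\pi\in\Pi}V_\rho(\pi)$. $\pi^\star\in\Pi$ denotes an optimal policy, i.e. one minimizing $V_s(\cdot)$ simultaneously for all $s$ (such a policy exists). The $Q$-function is $Q_{s,a}(\pi)=R_{s,a}+\gamma\sum_{s'}P(s'|s,a)V_{s'}(\pi)$. The discounted state-visitation distribution is $d_{s,s'}(\pi)=(1-\gamma)\sum_{t\ge0}\gamma^t\Pr^\pi(s_t=s'\mid s_0=s)$ and $d_{\rho,s'}(\pi)=\sum_s\rho_sd_{s,s'}(\pi)$, giving $d_\rho(\pi)\in\Delta(\mathcal{S})$.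 The policy gradient $\nabla V_\rho(\pi)\in\mathbf{R}^{|\mathcal{S}|\times|\mathcal{A}|}$ has entries $\frac{1}{1-\gamma}d_{\rho,s}(\pi)Q_{s,a}(\pi)$. For $p,q\in\Delta(\mathcal{S})$, $\|p/q\|_\infty=\max_s p_s/q_s$ with the convention $0/0=1$ (and $c/0=+\infty$ for $c>0$). $\mathrm{proj}_\Pi$ is Euclidean projection onto $\Pi$. *)

(* Defs.v *)
From HB Require Import structures.
From mathcomp Require Import all_boot all_order all_algebra.
From mathcomp Require Import all_classical all_reals all_analysis.
Set Implicit Arguments. Unset Strict Implicit. Unset Printing Implicit Defensive.
Import Order.TTheory GRing.Theory Num.Theory.
Local Open Scope ring_scope.
Local Open Scope classical_set_scope.

Section MDP.
Variables (R : realType) (S A : finType).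

Definition is_dist (T : finType) (p : T -> R) : Prop :=
  (forall x, 0 <= p x) /\ \sum_(x : T) p x = 1.

Definition is_policy (pi : S -> A -> R) : Prop := forall s, is_dist (pi s).

Variables (P : S -> A -> S -> R) (Rc : S -> A -> R) (gamma : R).

Definition Ppi (pi : S -> A -> R) (s s' : S) : R := \sum_(a : A) pi s a * P s a s'.
Definition rpi (pi : S -> A -> R) (s : S) : R := \sum_(a : A) pi s a * Rc s a.

(* Pt pi t s s' = Pr^pi (s_t = s' | s_0 = s) *)
Fixpoint Pt (pi : S -> A -> R) (t : nat) (s s' : S) : R :=
  match t with
  | 0%N => (s == s')%:R
  | t'.+1 => \sum_(u : S) Pt pi t' s u * Ppi pi u s'
  end.

(* V_s(pi) = E[ sum_t gamma^t R(s_t,a_t) | s_0 = s ] *)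
Definition Vs (pi : S -> A -> R) (s : S) : R :=
  limn (fun n => \sum_(0 <= t < n) gamma ^+ t * \sum_(s' : S) Pt pi t s s' * rpi pi s').

Definition Vrho (rho : S -> R) (pi : S -> A -> R) : R :=
  \sum_(s : S) rho s * Vs pi s.

Definition Vstar (rho : S -> R) : R :=
  inf [set Vrho rho pi | pi in [set pi | is_policy pi]].

Definition Qf (pi : S -> A -> R) (s : S) (a : A) : R :=
  Rc s a + gamma * \sum_(s' : S) P s a s' * Vs pi s'.

Definition dvis (pi : S -> A -> R) (s s' : S) : R :=
  (1 - gamma) * limn (fun n => \sum_(0 <= t < n) gamma ^+ t * Pt pi t s s').

Definition drho (rho : S -> R) (pi : S -> A -> R) (s' : S) : R :=
  \sum_(s : S) rho s * dvis pi s s'.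

Definition gradV (rho : S -> R) (pi : S -> A -> R) (s : S) (a : A) : R :=
  (1 - gamma)^-1 * drho rho pi s * Qf pi s a.

Definition is_optimal (pistar : S -> A -> R) : Prop :=
  is_policy pistar /\
  forall pi, is_policy pi -> forall s, Vs pistar s <= Vs pi s.

End MDP.

Definition sqdist (R : realType) (S A : finType) (x y : S -> A -> R) : R :=
  \sum_(s : S) \sum_(a : A) (x s a - y s a) ^+ 2.

Definition is_proj_Pi (R : realType) (S A : finType) (x p : S -> A -> R) : Prop :=
  is_policy p /\ forall q, is_policy q -> sqdist x p <= sqdist x q.

(* || p / q ||_infty with conventions 0/0 = 1 and c/0 = +oo (c > 0) *)
Definition ratio_inf (R : realType) (S : finType) (p q : S -> R) : \bar R :=
  \big[Order.max/-oo%E]_(s : S)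
    (if q s == 0 then (if p s == 0 then 1%E else +oo%E) else (p s / q s)%:E).

(* Main.v *)
Require Import Defs.
From HB Require Import structures.
From mathcomp Require Import all_boot all_order all_algebra.
From mathcomp Require Import all_classical all_reals all_analysis.
From mathcomp Require Import ring lra.
Import Order.TTheory GRing.Theory Num.Theory.
Import numFieldNormedType.Exports.
Local Open Scope classical_set_scope.
Local Open Scope ring_scope.

Section Lim.
Variable R : realType.

Lemma cvg_sumF (I : finType) (f : I -> nat -> R) (l : I -> R) :
  (forall i, f i n @[n --> \oo] --> l i) ->
  (fun n => \sum_(i : I) f i n) @ \oo --> \sum_(i : I) l i.
Proof.
move=> H; apply: (@cvg_big R I +%R 0 predT) => //.
exact: add_continuous.
Qed.

End Lim.

Section RealRec.
Variable R : realType.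

Lemma le_inv (y z : R) : 0 < y -> y * z <= 1 -> z <= y^-1.
Proof.
move=> hy H; rewrite -(ler_pM2l hy) mulfV ?gt_eqF //.
Qed.

Lemma inv_le (x y : R) : 0 < x -> x <= y -> y^-1 <= x^-1.
Proof.
move=> hx hxy; have hy : 0 < y by apply: lt_le_trans hxy.
apply: le_inv => //; apply: le_trans (_ : y * y^-1 <= 1).
  by apply: ler_wpM2r => //; rewrite invr_ge0 ltW.
by rewrite mulfV ?gt_eqF.
Qed.

Lemma step_real (dl dl' c D b x : R) : 0 <= dl -> dl <= x -> 0 < c -> 0 < D -> 0 < b ->
  b * (4 * D) <= c ^+ 2 -> b * x <= c / 2 ->
  (forall alpha, 0 <= alpha <= 1 -> dl' <= dl - alpha * c * dl + D * alpha ^+ 2) ->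
  dl' <= dl - b * dl ^+ 2.
Proof.
move=> h0 hx hc hD hb h4 hbx H.
case: (lerP (c * dl) (2 * D)) => Hc.
  set al := c * dl / (2 * D).
  have hal : 0 <= al <= 1.
    apply/andP; split; first by rewrite /al divr_ge0 // mulr_ge0 // ltW.
    by rewrite /al ler_pdivrMr ?mulr_gt0 // mul1r.
  have := H al hal.
  have E : dl - al * c * dl + D * al ^+ 2 = dl - c ^+ 2 * dl ^+ 2 / (4 * D).
    by rewrite /al; field; rewrite gt_eqF.
  rewrite E => H1; apply: le_trans H1 _.
  rewrite lerD2l lerN2 ler_pdivlMr ?mulr_gt0 //.
  have hd2 : 0 <= dl ^+ 2 by exact: sqr_ge0.
  nra.
have := H 1; rewrite ler01 lexx => /(_ isT).
move=> H1; apply: le_trans H1 _.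
have H2 : b * dl ^+ 2 <= b * x * dl.
  rewrite expr2 mulrA; apply: ler_wpM2r => //; apply: ler_wpM2l => //; exact: ltW.
have H3 : b * x * dl <= c / 2 * dl by apply: ler_wpM2r.
lra.
Qed.

Lemma rec_real (d : nat -> R) b : 0 < b -> (forall k, d k.+1 <= d k - b * d k ^+ 2) ->
  forall k, (1 <= k)%N -> d k <= (b * k%:R)^-1.
Proof.
move=> hb H.
have claim : forall k, d k.+1 <= (b * (k.+2)%:R)^-1.
  elim=> [|k IH].
    apply: le_trans (H 0%N) _; apply: le_inv; first by rewrite mulr_gt0.
    have E : b * 2%:R * (d 0%N - b * d 0%N ^+ 2) = (1 - (1 - 2 * b * d 0%N) ^+ 2) / 2.
      by field.
    rewrite E; have hs := sqr_ge0 (1 - 2 * b * d 0%N); lra.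
  set n : R := (k.+2)%:R.
  have hn : 2 <= n by rewrite /n ler_nat.
  set y := (b * n)^-1.
  have hy : 0 < y by rewrite /y invr_gt0 mulr_gt0 // (lt_le_trans _ hn).
  have hby : b * y <= 2^-1.
    rewrite /y invfM mulrA mulfV ?gt_eqF // mul1r; apply: inv_le => //.
  apply: le_trans (H k.+1) _.
  have Hf : d k.+1 - b * d k.+1 ^+ 2 <= y - b * y ^+ 2.
    have E : y - b * y ^+ 2 - (d k.+1 - b * d k.+1 ^+ 2)
        = (y - d k.+1) * (1 - b * (d k.+1 + y)) by ring.
    rewrite -subr_ge0 E; apply: mulr_ge0; first by rewrite subr_ge0.
    have : b * d k.+1 <= b * y by apply: ler_wpM2l => //; exact: ltW.
    lra.
  apply: le_trans Hf _.
  have -> : (k.+1).+2%:R = n + 1 :> R by rewrite /n -natr1.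
  apply: le_inv; first by rewrite mulr_gt0 // (lt_le_trans _ (lerD hn (lexx 1))).
  have E : b * (n + 1) * (y - b * y ^+ 2) = 1 - (n ^+ 2)^-1.
    rewrite /y; field; rewrite !gt_eqF // (lt_le_trans _ hn) //.
  by rewrite E lerBlDr lerDl invr_ge0 sqr_ge0.
case=> [|k] // _; apply: le_trans (claim k) _.
apply: inv_le; first by rewrite mulr_gt0 // ltr0n.
by apply: ler_wpM2l; [exact: ltW|rewrite ler_nat].
Qed.

End RealRec.

Section ExtraHelpers.
Variable R : realType.

Lemma exists_pos (T : finType) (f : T -> R) : \sum_t f t = 1 -> exists t, 0 < f t.
Proof.
move=> H; case: (pselect (exists t, 0 < f t)) => // hn; exfalso.
have : \sum_t f t <= 0.
  apply: sumr_le0 => t _; rewrite leNgt; apply/negP => ht; apply: hn; by exists t.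
by rewrite H ler10.
Qed.

Lemma bigmax_ge (T : eqType) (F : T -> \bar R) (r : seq T) (t : T) : t \in r ->
  (F t <= \big[Order.max/-oo%E]_(i <- r) F i)%E.
Proof.
elim: r => [|x r IH] //; rewrite inE big_cons le_max => /orP[/eqP ->|/IH ->].
  by rewrite lexx.
by rewrite orbT.
Qed.

End ExtraHelpers.

Section Markov.
Variables (R : realType) (S A : finType).
Variables (P : S -> A -> S -> R) (Rc : S -> A -> R) (gamma : R).
Hypothesis hP : forall s a, is_dist (P s a).
Hypothesis hg : 0 < gamma < 1.
Hypothesis hR : forall s a, 0 <= Rc s a <= 1.

Definition Sn (pi : S -> A -> R) (n : nat) (s s' : S) : R :=
  \sum_(0 <= t < n) gamma ^+ t * Pt P pi t s s'.
Definition Mr (pi : S -> A -> R) (s s' : S) : R :=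
  limn (fun n => \sum_(0 <= t < n) gamma ^+ t * Pt P pi t s s').

Lemma g0 : 0 < gamma. Proof. by case/andP: hg. Qed.
Lemma g1 : gamma < 1. Proof. by case/andP: hg. Qed.

Lemma Ppi_ge0 pi : is_policy pi -> forall s s', 0 <= Ppi P pi s s'.
Proof.
move=> hpi s s'; apply: sumr_ge0 => a _; apply: mulr_ge0.
  by case: (hpi s) => H _; apply: H.
by case: (hP s a) => H _; apply: H.
Qed.

Lemma Ppi_sum1 pi : is_policy pi -> forall s, \sum_s' Ppi P pi s s' = 1.
Proof.
move=> hpi s; rewrite /Ppi exchange_big /=.
rewrite -[RHS](proj2 (hpi s)); apply: eq_bigr => a _.
by rewrite -mulr_sumr (proj2 (hP s a)) mulr1.
Qed.

Lemma Pt_ge0 pi : is_policy pi -> forall t s s', 0 <= Pt P pi t s s'.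
Proof.
move=> hpi; elim=> [|t IH] s s' /=; first by rewrite ler0n.
by apply: sumr_ge0 => u _; apply: mulr_ge0 => //; apply: Ppi_ge0.
Qed.

Lemma Pt_sum1 pi : is_policy pi -> forall t s, \sum_s' Pt P pi t s s' = 1.
Proof.
move=> hpi; elim=> [|t IH] s /=.
  by rewrite (bigD1 s) //= eqxx big1 ?addr0 // => u; rewrite eq_sym => /negPf ->.
rewrite exchange_big /= -[RHS](IH s); apply: eq_bigr => u _.
by rewrite -mulr_sumr Ppi_sum1 // mulr1.
Qed.

Lemma PtS_left pi t s s' :
  Pt P pi t.+1 s s' = \sum_u Ppi P pi s u * Pt P pi t u s'.
Proof.
elim: t s s' => [|t IH] s s'.
  rewrite /= (bigD1 s) //= eqxx mul1r big1 ?addr0; last first.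
    by move=> u; rewrite eq_sym => /negPf ->; rewrite mul0r.
  rewrite (bigD1 s') //= eqxx mulr1 big1 ?addr0 //.
  by move=> u /negPf ->; rewrite mulr0.
have -> : Pt P pi t.+2 s s' = \sum_u Pt P pi t.+1 s u * Ppi P pi u s' by [].
under eq_bigr => u _ do rewrite IH mulr_suml.
rewrite exchange_big /=; apply: eq_bigr => w _.
by rewrite /= mulr_sumr; apply: eq_bigr => u _; rewrite mulrA.
Qed.

Lemma geom_le n : \sum_(0 <= t < n) gamma ^+ t <= (1 - gamma)^-1.
Proof.
have h1 : 0 < 1 - gamma by rewrite subr_gt0 g1.
have E : (1 - gamma) * \sum_(0 <= t < n) gamma ^+ t = 1 - gamma ^+ n.
  elim: n => [|n IH]; first by rewrite big_geq // mulr0 expr0 subrr.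
  rewrite big_nat_recr //= mulrDr IH exprS; ring.
rewrite -(ler_pM2l h1) E mulfV ?gt_eqF // lerBlDr lerDl.
by rewrite exprn_ge0 // ltW // g0.
Qed.

Lemma Sn_ge0 pi : is_policy pi -> forall n s s', 0 <= Sn pi n s s'.
Proof.
move=> hpi n s s'; apply: sumr_ge0 => t _; apply: mulr_ge0.
  by rewrite exprn_ge0 // ltW // g0.
exact: Pt_ge0.
Qed.

Lemma Sn_row pi : is_policy pi -> forall n s, \sum_s' Sn pi n s s' <= (1 - gamma)^-1.
Proof.
move=> hpi n s; rewrite /Sn exchange_big /=.
apply: le_trans (geom_le n); apply: ler_sum => t _.
by rewrite -mulr_sumr Pt_sum1 // mulr1.
Qed.

Lemma Sn_le pi : is_policy pi -> forall n s s', Sn pi n s s' <= (1 - gamma)^-1.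
Proof.
move=> hpi n s s'; apply: le_trans (Sn_row _ hpi n s).
rewrite (bigD1 s') //= lerDl; apply: sumr_ge0 => u _; exact: Sn_ge0.
Qed.

Lemma Sn_cvg pi : is_policy pi -> forall s s',
  (fun n => Sn pi n s s') @ \oo --> Mr pi s s'.
Proof.
move=> hpi s s'; apply: nondecreasing_is_cvgn.
  apply/nondecreasing_seqP => n; rewrite /Sn big_nat_recr //= lerDl.
  by apply: mulr_ge0; [rewrite exprn_ge0 // ltW // g0|exact: Pt_ge0].
by exists (1 - gamma)^-1 => _ [n _ <-]; exact: Sn_le.
Qed.


Lemma Mr_ge0 pi : is_policy pi -> forall s s', 0 <= Mr pi s s'.
Proof.
move=> hpi s s'; have H := cvgr_to_ge (Sn_cvg pi hpi s s').
apply: H.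
by apply: nearW => n; exact: Sn_ge0.
Qed.

Lemma Mr_row pi : is_policy pi -> forall s, \sum_s' Mr pi s s' <= (1 - gamma)^-1.
Proof.
move=> hpi s.
have H : (fun n => \sum_s' Sn pi n s s') @ \oo --> \sum_s' Mr pi s s'.
  by apply: cvg_sumF => s'; exact: Sn_cvg.
apply: (cvgr_to_le H); apply: nearW => n; exact: Sn_row.
Qed.

Lemma Mr_le pi : is_policy pi -> forall s s', Mr pi s s' <= (1 - gamma)^-1.
Proof.
move=> hpi s s'; apply: le_trans (Mr_row _ hpi s).
rewrite (bigD1 s') //= lerDl; apply: sumr_ge0 => u _; exact: Mr_ge0.
Qed.

Lemma PtS_right pi t s s' :
  Pt P pi t.+1 s s' = \sum_u Pt P pi t s u * Ppi P pi u s'.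
Proof. by []. Qed.

Lemma Mr_idL pi : is_policy pi -> forall s s',
  Mr pi s s' = (s == s')%:R + gamma * \sum_u Ppi P pi s u * Mr pi u s'.
Proof.
move=> hpi s s'.
have E : forall n, Sn pi n.+1 s s' =
    (s == s')%:R + gamma * \sum_u Ppi P pi s u * Sn pi n u s'.
  move=> n; rewrite /Sn big_nat_recl // expr0 mul1r; congr (_ + _).
  under eq_bigr => t _ do rewrite PtS_left mulr_sumr.
  rewrite exchange_big /= mulr_sumr; apply: eq_bigr => u _.
  rewrite !mulr_sumr; apply: eq_bigr => t _; rewrite exprS; ring.
have H1 : (fun n => Sn pi n.+1 s s') @ \oo --> Mr pi s s'.
  by rewrite (cvg_shiftS (fun n => Sn pi n s s')); exact: Sn_cvg.
have H2 : (fun n => Sn pi n.+1 s s') @ \oo -->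
    (s == s')%:R + gamma * \sum_u Ppi P pi s u * Mr pi u s'.
  under eq_fun => n do rewrite E.
  apply: cvgD; first exact: cvg_cst.
  apply: cvgMl_tmp; apply: cvg_sumF => u; apply: cvgMl_tmp; exact: Sn_cvg.
by rewrite -(cvg_lim _ H2) // -(cvg_lim _ H1).
Qed.

Lemma Mr_idR pi : is_policy pi -> forall s s',
  Mr pi s s' = (s == s')%:R + gamma * \sum_u Mr pi s u * Ppi P pi u s'.
Proof.
move=> hpi s s'.
have E : forall n, Sn pi n.+1 s s' =
    (s == s')%:R + gamma * \sum_u Sn pi n s u * Ppi P pi u s'.
  move=> n; rewrite /Sn big_nat_recl // expr0 mul1r; congr (_ + _).
  under eq_bigr => t _ do rewrite PtS_right mulr_sumr.
  rewrite exchange_big /= mulr_sumr; apply: eq_bigr => u _.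
  rewrite mulr_suml !mulr_sumr; apply: eq_bigr => t _; rewrite exprS; ring.
have H1 : (fun n => Sn pi n.+1 s s') @ \oo --> Mr pi s s'.
  by rewrite (cvg_shiftS (fun n => Sn pi n s s')); exact: Sn_cvg.
have H2 : (fun n => Sn pi n.+1 s s') @ \oo -->
    (s == s')%:R + gamma * \sum_u Mr pi s u * Ppi P pi u s'.
  under eq_fun => n do rewrite E.
  apply: cvgD; first exact: cvg_cst.
  apply: cvgMl_tmp; apply: cvg_sumF => u; apply: cvgMr_tmp; exact: Sn_cvg.
by rewrite -(cvg_lim _ H2) // -(cvg_lim _ H1).
Qed.

Lemma Mr_diag pi : is_policy pi -> forall s, 1 <= Mr pi s s.
Proof.
move=> hpi s; rewrite Mr_idL // eqxx lerDl; apply: mulr_ge0; first exact: ltW g0.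
apply: sumr_ge0 => u _; apply: mulr_ge0; [exact: Ppi_ge0|exact: Mr_ge0].
Qed.

Lemma Vs_Mr pi : is_policy pi -> forall s,
  Vs P Rc gamma pi s = \sum_s' Mr pi s s' * rpi Rc pi s'.
Proof.
move=> hpi s; rewrite /Vs.
have -> : (fun n => \sum_(0 <= t < n) gamma ^+ t * \sum_s' Pt P pi t s s' * rpi Rc pi s')
   = (fun n => \sum_s' Sn pi n s s' * rpi Rc pi s').
  apply: funext => n; rewrite /Sn.
  under eq_bigr => t _ do rewrite mulr_sumr.
  rewrite exchange_big /=; apply: eq_bigr => s' _.
  by rewrite mulr_suml; apply: eq_bigr => t _; rewrite mulrA.
apply/cvg_lim => //; apply: cvg_sumF => s'; apply: cvgMr_tmp; exact: Sn_cvg.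
Qed.

Lemma dvis_Mr pi s s' : dvis P gamma pi s s' = (1 - gamma) * Mr pi s s'.
Proof. by []. Qed.


Local Notation V := (Vs P Rc gamma).
Local Notation Q := (Qf P Rc gamma).
Local Notation M := Mr.

Lemma sum_delta (f : S -> R) s : \sum_s' (s == s')%:R * f s' = f s.
Proof.
rewrite (bigD1 s) //= eqxx mul1r big1 ?addr0 //.
by move=> u; rewrite eq_sym => /negPf ->; rewrite mul0r.
Qed.

Lemma sum_deltar (f : S -> R) s : \sum_s' f s' * (s' == s)%:R = f s.
Proof.
rewrite (bigD1 s) //= eqxx mulr1 big1 ?addr0 //.
by move=> u /negPf ->; rewrite mulr0.
Qed.

Lemma bellman pi : is_policy pi -> forall s,
  V pi s = rpi Rc pi s + gamma * \sum_u Ppi P pi s u * V pi u.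
Proof.
move=> hpi s; rewrite (Vs_Mr _ hpi).
under eq_bigr => s' _ do rewrite (Mr_idL _ hpi) mulrDl.
rewrite big_split /= sum_delta; congr (_ + _).
under eq_bigr => s' _ do rewrite -mulrA.
rewrite -mulr_sumr; congr (_ * _).
transitivity (\sum_i \sum_u Ppi P pi s u * M pi u i * rpi Rc pi i).
  by apply: eq_bigr => i _; rewrite mulr_suml.
rewrite exchange_big /=; apply: eq_bigr => u _.
rewrite (Vs_Mr _ hpi) mulr_sumr; apply: eq_bigr => i _; by rewrite mulrA.
Qed.

Lemma sumQ pi (pi' : S -> A -> R) s :
  \sum_a pi' s a * Q pi s a =
  rpi Rc pi' s + gamma * \sum_u Ppi P pi' s u * V pi u.
Proof.
rewrite /Qf /rpi /Ppi.
under eq_bigr => a _ do rewrite mulrDr.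
rewrite big_split /=; congr (_ + _).
under eq_bigr => a _ do rewrite mulrCA.
rewrite -mulr_sumr; congr (_ * _).
transitivity (\sum_i \sum_s' pi' s i * (P s i s' * V pi s')).
  by apply: eq_bigr => i _; rewrite mulr_sumr.
rewrite exchange_big /=; apply: eq_bigr => u _.
by rewrite mulr_suml; apply: eq_bigr => a _; rewrite mulrA.
Qed.

Lemma V_Q pi : is_policy pi -> forall s, V pi s = \sum_a pi s a * Q pi s a.
Proof. by move=> hpi s; rewrite sumQ bellman. Qed.

Lemma rpi_ge0 pi : is_policy pi -> forall s, 0 <= rpi Rc pi s.
Proof.
move=> hpi s; apply: sumr_ge0 => a _; apply: mulr_ge0.
  exact: (proj1 (hpi s)).
by case/andP: (hR s a).
Qed.

Lemma rpi_le1 pi : is_policy pi -> forall s, rpi Rc pi s <= 1.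
Proof.
move=> hpi s; rewrite -(proj2 (hpi s)); apply: ler_sum => a _.
rewrite -[X in _ <= X]mulr1; apply: ler_wpM2l; first exact: (proj1 (hpi s)).
by case/andP: (hR s a).
Qed.

Lemma V_ge0 pi : is_policy pi -> forall s, 0 <= V pi s.
Proof.
move=> hpi s; rewrite (Vs_Mr _ hpi); apply: sumr_ge0 => u _.
apply: mulr_ge0; [exact: Mr_ge0|exact: rpi_ge0].
Qed.

Lemma V_le pi : is_policy pi -> forall s, V pi s <= (1 - gamma)^-1.
Proof.
move=> hpi s; rewrite (Vs_Mr _ hpi); apply: le_trans (Mr_row _ hpi s).
apply: ler_sum => u _; rewrite -[X in _ <= X]mulr1; apply: ler_wpM2l.
  exact: Mr_ge0.
exact: rpi_le1.
Qed.

Lemma Q_ge0 pi : is_policy pi -> forall s a, 0 <= Q pi s a.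
Proof.
move=> hpi s a; rewrite /Qf; apply: addr_ge0; first by case/andP: (hR s a).
apply: mulr_ge0; first exact: ltW g0.
apply: sumr_ge0 => u _; apply: mulr_ge0; first exact: (proj1 (hP s a)).
exact: V_ge0.
Qed.

Lemma Q_le pi : is_policy pi -> forall s a, Q pi s a <= (1 - gamma)^-1.
Proof.
move=> hpi s a; rewrite /Qf.
have h1 : 0 < 1 - gamma by rewrite subr_gt0 g1.
have H : \sum_u P s a u * V pi u <= (1 - gamma)^-1.
  apply: le_trans (_ : \sum_u P s a u * (1 - gamma)^-1 <= _).
    apply: ler_sum => u _; apply: ler_wpM2l; first exact: (proj1 (hP s a)).
    exact: V_le.
  by rewrite -mulr_suml (proj2 (hP s a)) mul1r.
apply: le_trans (_ : 1 + gamma * (1 - gamma)^-1 <= _).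
  apply: lerD; first by case/andP: (hR s a).
  by apply: ler_wpM2l => //; exact: ltW g0.
suff -> : 1 + gamma * (1 - gamma)^-1 = (1 - gamma)^-1 by [].
by field; rewrite gt_eqF.
Qed.

Definition gadv (pi pi' : S -> A -> R) (u : S) : R :=
  \sum_a (pi' u a - pi u a) * Q pi u a.

Lemma perf_diff pi pi' : is_policy pi -> is_policy pi' -> forall s,
  V pi' s - V pi s = \sum_u M pi' s u * gadv pi pi' u.
Proof.
move=> hpi hpi' s.
have E : forall u, gadv pi pi' u =
    rpi Rc pi' u + gamma * \sum_w Ppi P pi' u w * V pi w - V pi u.
  move=> u; rewrite /gadv.
  under eq_bigr => a _ do rewrite mulrBl.
  by rewrite sumrB sumQ -V_Q.
under eq_bigr => u _ do rewrite E !mulrDr.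
rewrite !big_split /= -(Vs_Mr _ hpi').
have -> : \sum_u M pi' s u * (gamma * \sum_w Ppi P pi' u w * V pi w)
   = \sum_w (M pi' s w - (s == w)%:R) * V pi w.
  under [RHS]eq_bigr => w _ do rewrite (Mr_idR _ hpi') addrC addKr.
  transitivity (\sum_u \sum_w gamma * (M pi' s u * Ppi P pi' u w) * V pi w).
    apply: eq_bigr => u _; rewrite !mulr_sumr; apply: eq_bigr => w _; ring.
  by rewrite exchange_big /=; apply: eq_bigr => w _; rewrite mulr_sumr mulr_suml.
have -> : \sum_w (M pi' s w - (s == w)%:R) * V pi w
    = \sum_w M pi' s w * V pi w - V pi s.
  by rewrite -(sum_delta (V pi) s) -sumrB; apply: eq_bigr => w _; ring.
have -> : \sum_i M pi' s i * - V pi i = - \sum_i M pi' s i * V pi i.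
  by rewrite -sumrN; apply: eq_bigr => i _; ring.
ring.
Qed.

Lemma Mr_diff pi pi' : is_policy pi -> is_policy pi' -> forall s v,
  M pi' s v - M pi s v =
  gamma * \sum_w \sum_u M pi' s w * (Ppi P pi' w u - Ppi P pi w u) * M pi u v.
Proof.
move=> hpi hpi' s v.
have E1 : gamma * \sum_w \sum_u M pi' s w * Ppi P pi w u * M pi u v
    = \sum_w M pi' s w * M pi w v - M pi' s v.
  rewrite mulr_sumr.
  have -> : M pi' s v = \sum_w M pi' s w * (w == v)%:R by rewrite sum_deltar.
  rewrite -sumrB; apply: eq_bigr => w _.
  rewrite (Mr_idL _ hpi w v) mulrDr mulr_sumr mulr_sumr addrC addKr.
  by rewrite mulr_sumr; apply: eq_bigr => u _; ring.
have E2 : gamma * \sum_w \sum_u M pi' s w * Ppi P pi' w u * M pi u v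
    = \sum_w M pi' s w * M pi w v - M pi s v.
  rewrite exchange_big /= mulr_sumr.
  have -> : M pi s v = \sum_u (s == u)%:R * M pi u v by rewrite sum_delta.
  rewrite -sumrB; apply: eq_bigr => u _.
  rewrite (Mr_idR _ hpi' s u) mulrDl addrAC subrr add0r -mulrA mulr_suml mulr_sumr.
  by apply: eq_bigr => w _; ring.
have -> : \sum_w \sum_u M pi' s w * (Ppi P pi' w u - Ppi P pi w u) * M pi u v
   = \sum_w \sum_u M pi' s w * Ppi P pi' w u * M pi u v
     - \sum_w \sum_u M pi' s w * Ppi P pi w u * M pi u v.
  rewrite -sumrB; apply: eq_bigr => w _; rewrite -sumrB; apply: eq_bigr => u _; ring.
rewrite mulrBr E1 E2; ring.
Qed.


Lemma norm_sum_le (I : finType) (x f : I -> R) C :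
  (forall i, `|f i| <= C) -> `|\sum_i x i * f i| <= (\sum_i `|x i|) * C.
Proof.
move=> H; apply: le_trans (ler_norm_sum _ _ _) _.
rewrite mulr_suml; apply: ler_sum => i _; rewrite normrM.
by apply: ler_wpM2l => //; exact: normr_ge0.
Qed.

Lemma cauchy_schwarz (y : A -> R) : (0 < #|A|)%N ->
  (\sum_a `|y a|) ^+ 2 <= #|A|%:R * \sum_a y a ^+ 2.
Proof.
move=> hA.
set z := fun a => `|y a|.
have Ez : forall a, y a ^+ 2 = z a ^+ 2 by move=> a; rewrite /z real_normK ?num_real.
rewrite (eq_bigr _ (fun a _ => Ez a)).
set n : R := #|A|%:R.
set Sz := \sum_a z a.
have hn : 0 < n by rewrite /n ltr0n.
have E : \sum_a (n * z a - Sz) ^+ 2 = n * (n * \sum_a z a ^+ 2 - Sz ^+ 2).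
  transitivity (\sum_a (n ^+ 2 * z a ^+ 2 - (2 * n * Sz) * z a + Sz ^+ 2)).
    by apply: eq_bigr => a _; ring.
  rewrite big_split sumrB /= -!mulr_sumr sumr_const -mulr_natr -/n -/Sz; ring.
have H : 0 <= n * (n * \sum_a z a ^+ 2 - Sz ^+ 2).
  by rewrite -E; apply: sumr_ge0 => a _; exact: sqr_ge0.
by move: H; rewrite pmulr_rge0 // subr_ge0.
Qed.

Lemma drho_M rho pi u :
  drho P gamma rho pi u = (1 - gamma) * \sum_s rho s * M pi s u.
Proof. by rewrite /drho mulr_sumr; apply: eq_bigr => s _; rewrite dvis_Mr; ring. Qed.

Lemma g1ne : 1 - gamma != 0.
Proof. by rewrite gt_eqF // subr_gt0 g1. Qed.

Lemma Vrho_diff rho pi pi' : is_policy pi -> is_policy pi' ->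
  Vrho P Rc gamma rho pi' - Vrho P Rc gamma rho pi =
  (1 - gamma)^-1 * \sum_u drho P gamma rho pi' u * gadv pi pi' u.
Proof.
move=> hpi hpi'.
rewrite /Vrho -sumrB.
transitivity (\sum_s \sum_u rho s * M pi' s u * gadv pi pi' u).
  apply: eq_bigr => s _; rewrite -mulrBr perf_diff // mulr_sumr.
  by apply: eq_bigr => u _; rewrite mulrA.
rewrite exchange_big /= mulr_sumr; apply: eq_bigr => u _.
rewrite drho_M [in RHS]mulrA [in RHS]mulrA mulVf ?g1ne // mul1r mulr_suml.
by apply: eq_bigr => s _.
Qed.

Lemma inner_grad rho pi pi' :
  \sum_s \sum_a gradV P Rc gamma rho pi s a * (pi' s a - pi s a) =
  (1 - gamma)^-1 * \sum_u drho P gamma rho pi u * gadv pi pi' u.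
Proof.
rewrite mulr_sumr; apply: eq_bigr => u _.
rewrite /gadv !mulr_sumr; apply: eq_bigr => a _.
rewrite /gradV; ring.
Qed.

Definition ell (pi pi' : S -> A -> R) (u : S) := \sum_a `|pi' u a - pi u a|.

Lemma gadv_bound pi pi' : is_policy pi -> forall u,
  `|gadv pi pi' u| <= ell pi pi' u * (1 - gamma)^-1.
Proof.
move=> hpi u; rewrite /gadv /ell; apply: norm_sum_le => a.
rewrite ger0_norm; [exact: Q_le|exact: Q_ge0].
Qed.

Lemma descent rho pi pi' : is_dist rho -> is_policy pi -> is_policy pi' -> (0 < #|A|)%N ->
  Vrho P Rc gamma rho pi' <=
  Vrho P Rc gamma rho pi
  + \sum_s \sum_a gradV P Rc gamma rho pi s a * (pi' s a - pi s a)
  + gamma * #|A|%:R / (1 - gamma) ^+ 3 * sqdist pi' pi.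
Proof.
move=> hrho hpi hpi' hA.
have hc : 0 < 1 - gamma by rewrite subr_gt0 g1.
have hci : 0 <= (1 - gamma)^-1 by rewrite invr_ge0 ltW.
set B := Num.sqrt (#|A|%:R * sqdist pi' pi).
have hB0 : 0 <= B by exact: sqrtr_ge0.
have hsd : 0 <= sqdist pi' pi.
  by apply: sumr_ge0 => s _; apply: sumr_ge0 => a _; exact: sqr_ge0.
have hB2 : B ^+ 2 = #|A|%:R * sqdist pi' pi.
  by rewrite sqr_sqrtr // mulr_ge0 // ler0n.
have hell : forall u, ell pi pi' u <= B.
  move=> u; have h0 : 0 <= ell pi pi' u.
    by apply: sumr_ge0 => a _; exact: normr_ge0.
  rewrite -(ger0_norm h0) -sqrtr_sqr; apply: ler_wsqrtr.
  apply: le_trans (cauchy_schwarz _ hA) _.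
  apply: ler_wpM2l; first by rewrite ler0n.
  rewrite /sqdist (bigD1 u) //= lerDl.
  by apply: sumr_ge0 => s _; apply: sumr_ge0 => a _; exact: sqr_ge0.
set g := gadv pi pi'.
have hgb : forall u, `|g u| <= B * (1 - gamma)^-1.
  move=> u; apply: le_trans (gadv_bound pi pi' hpi u) _.
  by apply: ler_wpM2r.
set h := fun v => \sum_u M pi v u * g u.
have hh : forall v, `|h v| <= B * (1 - gamma)^-1 * (1 - gamma)^-1.
  move=> v; apply: le_trans (norm_sum_le _ _ _ _ hgb) _.
  rewrite mulrC; apply: ler_wpM2l; first by rewrite mulr_ge0.
  apply: le_trans (Mr_row _ hpi v); apply: ler_sum => u _.
  by rewrite ger0_norm //; exact: Mr_ge0.
have hPh : forall w, `|\sum_v (Ppi P pi' w v - Ppi P pi w v) * h v|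
     <= B * (B * (1 - gamma)^-1 * (1 - gamma)^-1).
  move=> w.
  have -> : \sum_v (Ppi P pi' w v - Ppi P pi w v) * h v
      = \sum_a (pi' w a - pi w a) * \sum_v P w a v * h v.
    rewrite /Ppi; transitivity (\sum_v \sum_a (pi' w a - pi w a) * P w a v * h v).
      apply: eq_bigr => v _; rewrite -sumrB mulr_suml; apply: eq_bigr => a _; ring.
    rewrite exchange_big /=; apply: eq_bigr => a _; rewrite mulr_sumr.
    by apply: eq_bigr => v _; ring.
  apply: le_trans (norm_sum_le _ _ _ (B * (1 - gamma)^-1 * (1 - gamma)^-1) _) _.
    move=> a; apply: le_trans (norm_sum_le _ _ _ _ hh) _.
    rewrite -[X in _ <= X]mul1r; apply: ler_wpM2r; first by rewrite !mulr_ge0.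
    apply: le_trans (_ : \sum_v P w a v <= 1); last by rewrite (proj2 (hP w a)).
    by apply: ler_sum => v _; rewrite ger0_norm //; exact: (proj1 (hP w a)).
  by apply: ler_wpM2r; [rewrite !mulr_ge0|exact: hell].
set X := \sum_s rho s * \sum_u (M pi' s u - M pi s u) * g u.
have EX : Vrho P Rc gamma rho pi' - Vrho P Rc gamma rho pi
    - \sum_s \sum_a gradV P Rc gamma rho pi s a * (pi' s a - pi s a) = X.
  rewrite Vrho_diff // inner_grad -mulrBr -sumrB.
  transitivity (\sum_u (1 - gamma)^-1 * (drho P gamma rho pi' u - drho P gamma rho pi u) * g u).
    by rewrite /g mulr_sumr; apply: eq_bigr => u _; ring.
  rewrite /X.
  transitivity (\sum_u \sum_s rho s * ((M pi' s u - M pi s u) * g u)).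
    apply: eq_bigr => u _; rewrite !drho_M -mulrBr mulrA mulVf ?g1ne // mul1r -sumrB.
    by rewrite mulr_suml; apply: eq_bigr => s _; ring.
  by rewrite exchange_big /=; apply: eq_bigr => s _; rewrite mulr_sumr.
have EX2 : X = \sum_s rho s * (gamma * \sum_w M pi' s w *
              \sum_v (Ppi P pi' w v - Ppi P pi w v) * h v).
  rewrite /X; apply: eq_bigr => s _; congr (_ * _).
  transitivity (\sum_u \sum_w \sum_v gamma * (M pi' s w * (Ppi P pi' w v - Ppi P pi w v) * M pi v u * g u)).
    apply: eq_bigr => u _; rewrite Mr_diff // -mulrA mulr_suml mulr_sumr.
    apply: eq_bigr => w _; rewrite mulr_suml mulr_sumr; apply: eq_bigr => v _; ring.
  rewrite exchange_big /= mulr_sumr; apply: eq_bigr => w _.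
  rewrite exchange_big /= !mulr_sumr; apply: eq_bigr => v _.
  rewrite /h !mulr_sumr; apply: eq_bigr => u _; ring.
have hX : X <= gamma * #|A|%:R / (1 - gamma) ^+ 3 * sqdist pi' pi.
  apply: le_trans (ler_norm X) _.
  rewrite EX2.
  set C := B * (B * (1 - gamma)^-1 * (1 - gamma)^-1).
  apply: le_trans (norm_sum_le _ _ _ (gamma * ((1 - gamma)^-1 * C)) _) _.
    move=> s; rewrite normrM ger0_norm; last exact: ltW g0.
    apply: ler_wpM2l; first exact: ltW g0.
    apply: le_trans (norm_sum_le _ _ _ _ hPh) _.
    apply: ler_wpM2r; first by rewrite /C !mulr_ge0.
    apply: le_trans (Mr_row _ hpi' s); apply: ler_sum => u _.
    by rewrite ger0_norm //; exact: Mr_ge0.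
  have -> : \sum_s `|rho s| = 1.
    by rewrite -(proj2 hrho); apply: eq_bigr => s _; rewrite ger0_norm // (proj1 hrho).
  rewrite mul1r /C.
  rewrite [X in _ <= X](_ : _ = gamma * B ^+ 2 / (1 - gamma) ^+ 3); last first.
    by rewrite hB2; ring.
  rewrite le_eqVlt; apply/orP; left; apply/eqP; field; exact: g1ne.
move: hX; rewrite -EX => H; lra.
Qed.

Lemma sqdist_expand (pi y G : S -> A -> R) eta :
  sqdist (fun s a => pi s a - eta * G s a) y =
  sqdist y pi + 2 * eta * (\sum_s \sum_a G s a * (y s a - pi s a))
  + eta ^+ 2 * \sum_s \sum_a G s a ^+ 2.
Proof.
rewrite /sqdist !mulr_sumr -!big_split; apply: eq_bigr => s _.
rewrite !mulr_sumr -!big_split; apply: eq_bigr => a _ /=; ring.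
Qed.

Lemma policy_le1 (p : S -> A -> R) : is_policy p -> forall s a, p s a <= 1.
Proof.
move=> hp s a; rewrite -(proj2 (hp s)) (bigD1 a) //= lerDl.
by apply: sumr_ge0 => b _; exact: (proj1 (hp s)).
Qed.

Lemma diam (p q : S -> A -> R) : is_policy p -> is_policy q -> sqdist p q <= 2 * #|S|%:R.
Proof.
move=> hp hq; rewrite /sqdist.
apply: le_trans (_ : \sum_(s : S) 2 <= _); last by rewrite sumr_const mulr_natr.
apply: ler_sum => s _.
apply: le_trans (_ : \sum_a (p s a + q s a) <= _).
  apply: ler_sum => a _.
  have h1 := proj1 (hp s) a; have h2 := proj1 (hq s) a.
  have h3 := policy_le1 p hp s a; have h4 := policy_le1 q hq s a.
  nra.
by rewrite big_split /= (proj2 (hp s)) (proj2 (hq s)).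
Qed.

Lemma mix_policy (p q : S -> A -> R) alpha : is_policy p -> is_policy q -> 0 <= alpha <= 1 ->
  is_policy (fun s a => p s a + alpha * (q s a - p s a)).
Proof.
move=> hp hq /andP[ha0 ha1] s; split.
  move=> a; have h1 := proj1 (hp s) a; have h2 := proj1 (hq s) a.
  have h3 := policy_le1 p hp s a; have h4 := policy_le1 q hq s a.
  nra.
rewrite big_split /= -mulr_sumr sumrB (proj2 (hp s)) (proj2 (hq s)); ring.
Qed.

Lemma d_ge rho pi : is_dist rho -> is_policy pi -> forall u,
  (1 - gamma) * rho u <= drho P gamma rho pi u.
Proof.
move=> hrho hpi u; rewrite drho_M; apply: ler_wpM2l.
  by rewrite subr_ge0 ltW // g1.
rewrite (bigD1 u) //= -[X in X <= _]addr0; apply: lerD.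
  rewrite -[X in X <= _]mulr1; apply: ler_wpM2l; first exact: (proj1 hrho).
  exact: Mr_diag.
apply: sumr_ge0 => s _; apply: mulr_ge0; [exact: (proj1 hrho)|exact: Mr_ge0].
Qed.

Definition greedy (pi : S -> A -> R) (a0 : A) (s : S) : A :=
  [arg min_(a < a0) Q pi s a]%O.

Lemma greedy_min pi a0 s b : Q pi s (greedy pi a0 s) <= Q pi s b.
Proof. by rewrite /greedy; case: arg_minP => // a _ /(_ b isT). Qed.

Definition pgreedy pi a0 : S -> A -> R := fun s a => (a == greedy pi a0 s)%:R.

Lemma sum_pg pi a0 s (f : A -> R) : \sum_a pgreedy pi a0 s a * f a = f (greedy pi a0 s).
Proof.
rewrite /pgreedy (bigD1 (greedy pi a0 s)) //= eqxx mul1r big1 ?addr0 //.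
by move=> a /negPf ->; rewrite mul0r.
Qed.

Lemma pgreedy_policy pi a0 : is_policy (pgreedy pi a0).
Proof.
move=> s; split; first by move=> a; rewrite /pgreedy ler0n.
by rewrite -[RHS](sum_pg pi a0 s (fun _ => 1)); apply: eq_bigr => a _; rewrite mulr1.
Qed.

Lemma gadv_eq pi p : is_policy pi -> forall u,
  gadv pi p u = \sum_a p u a * Q pi u a - V pi u.
Proof.
move=> hpi u; rewrite /gadv (V_Q pi hpi) -sumrB; apply: eq_bigr => a _; ring.
Qed.

Lemma sumQ_ge pi a0 p : is_policy p -> forall u,
  Q pi u (greedy pi a0 u) <= \sum_a p u a * Q pi u a.
Proof.
move=> hp u; rewrite -[X in X <= _]mul1r -(proj2 (hp u)) mulr_suml.
apply: ler_sum => a _; apply: ler_wpM2l; first exact: (proj1 (hp u)).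
exact: greedy_min.
Qed.

Lemma one_step rho pistar pi pi' Mx alpha :
  is_dist rho -> is_optimal P Rc gamma pistar -> is_policy pi -> (0 < #|A|)%N ->
  is_proj_Pi (fun s a => pi s a - (1 - gamma) ^+ 3 / (2 * gamma * #|A|%:R)
                            * gradV P Rc gamma rho pi s a) pi' ->
  0 < Mx -> (forall s, drho P gamma rho pistar s <= Mx * rho s) ->
  0 <= alpha <= 1 ->
  Vrho P Rc gamma rho pi' - Vrho P Rc gamma rho pistar <=
  (Vrho P Rc gamma rho pi - Vrho P Rc gamma rho pistar)
  - alpha * ((1 - gamma) / Mx) * (Vrho P Rc gamma rho pi - Vrho P Rc gamma rho pistar)
  + 2 * gamma * #|A|%:R * #|S|%:R / (1 - gamma) ^+ 3 * alpha ^+ 2.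
Proof.
move=> hrho [hps hopt] hpi hA hproj hM hdM halpha.
have /andP[ha0 ha1] := halpha.
have hc : 0 < 1 - gamma by rewrite subr_gt0 g1.
have hci : 0 < (1 - gamma)^-1 by rewrite invr_gt0.
have hAr : 0 < #|A|%:R :> R by rewrite ltr0n.
have /card_gt0P [a0 _] := hA.
set eta := (1 - gamma) ^+ 3 / (2 * gamma * #|A|%:R).
set K := gamma * #|A|%:R / (1 - gamma) ^+ 3.
have heta : 0 < eta.
  by rewrite /eta divr_gt0 ?exprn_gt0 // !mulr_gt0 // g0.
have hK0 : 0 <= K.
  by rewrite /K divr_ge0 ?exprn_ge0 ?ltW // mulr_gt0 // g0.
have hK : 2 * eta * K = 1.
  rewrite /eta /K; field.
  by rewrite g1ne !gt_eqF // g0.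
have hpi' := proj1 hproj.
set G := gradV P Rc gamma rho pi.
set pt := pgreedy pi a0.
set q := fun s a => pi s a + alpha * (pt s a - pi s a).
have hq : is_policy q by apply: mix_policy => //; exact: pgreedy_policy.
have Hdes := descent rho pi pi' hrho hpi hpi' hA.
set I' := \sum_s \sum_a G s a * (pi' s a - pi s a).
set Iq := \sum_s \sum_a G s a * (q s a - pi s a).
have Hpr : I' <= Iq + K * (sqdist q pi - sqdist pi' pi).
  have H := proj2 hproj q hq; rewrite !sqdist_expand -/I' -/Iq -/eta in H.
  have H2 : 2 * eta * (I' - Iq) <= sqdist q pi - sqdist pi' pi by lra.
  have H3 : K * (2 * eta * (I' - Iq)) <= K * (sqdist q pi - sqdist pi' pi).
    exact: ler_wpM2l.
  have E : K * (2 * eta * (I' - Iq)) = I' - Iq.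
    have E0 : K * (2 * eta * (I' - Iq)) = (2 * eta * K) * (I' - Iq) by ring.
    by rewrite E0 hK mul1r.
  lra.
have hgap : forall u, 0 <= - gadv pi pt u.
  move=> u; rewrite gadv_eq // oppr_ge0 subr_le0 sum_pg V_Q //.
  exact: sumQ_ge.
have hgap2 : forall u, gadv pi pt u <= gadv pi pistar u.
  by move=> u; rewrite !gadv_eq // sum_pg lerD2r; exact: sumQ_ge.
set T := \sum_u drho P gamma rho pi u * (- gadv pi pt u).
have hT0 : 0 <= T.
  apply: sumr_ge0 => u _; apply: mulr_ge0 => //.
  by apply: le_trans (d_ge rho pi hrho hpi u); apply: mulr_ge0; [exact: ltW|exact: (proj1 hrho)].
have EIq : Iq = - alpha * ((1 - gamma)^-1 * T).
  have E : forall u, gadv pi q u = alpha * gadv pi pt u.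
    by move=> u; rewrite /gadv /q mulr_sumr; apply: eq_bigr => a _ /=; ring.
  rewrite /Iq inner_grad /T [RHS]mulrCA.
  congr (_ * _); rewrite mulr_sumr; apply: eq_bigr => u _; rewrite E; ring.
set dl := Vrho P Rc gamma rho pi - Vrho P Rc gamma rho pistar.
have Hd1 : dl <= (1 - gamma)^-1 * \sum_u drho P gamma rho pistar u * (- gadv pi pt u).
  rewrite /dl -opprB (Vrho_diff rho pi pistar hpi hps) -mulrN -sumrN.
  apply: ler_wpM2l; first exact: ltW.
  apply: ler_sum => u _; rewrite -mulrN; apply: ler_wpM2l; last by rewrite lerN2.
  by apply: le_trans (d_ge rho pistar hrho hps u); apply: mulr_ge0; [exact: ltW|exact: (proj1 hrho)].
have Hd2 : \sum_u drho P gamma rho pistar u * (- gadv pi pt u)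
    <= Mx * ((1 - gamma)^-1 * T).
  rewrite /T !mulr_sumr; apply: ler_sum => u _.
  apply: le_trans (_ : Mx * rho u * (- gadv pi pt u) <= _).
    by apply: ler_wpM2r => //; exact: hdM.
  rewrite -mulrA; apply: ler_wpM2l; first exact: ltW.
  rewrite mulrA; apply: ler_wpM2r => //.
  have := d_ge rho pi hrho hpi u.
  by rewrite -(ler_pM2l hc) mulrA mulfV ?gt_eqF // mul1r.
have Hd3 : (1 - gamma) / Mx * dl <= (1 - gamma)^-1 * T.
  have H : dl <= (1 - gamma)^-1 * (Mx * ((1 - gamma)^-1 * T)).
    apply: le_trans Hd1 _; apply: ler_wpM2l => //; exact: ltW.
  have E : (1 - gamma) / Mx * ((1 - gamma)^-1 * (Mx * ((1 - gamma)^-1 * T)))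
     = (1 - gamma)^-1 * T.
    by field; rewrite !gt_eqF.
  rewrite -E; apply: ler_wpM2l => //; rewrite divr_ge0 // ltW //.
have Hsq : sqdist q pi <= alpha ^+ 2 * (2 * #|S|%:R).
  have -> : sqdist q pi = alpha ^+ 2 * sqdist pt pi.
    rewrite /sqdist mulr_sumr; apply: eq_bigr => s _; rewrite mulr_sumr.
    by apply: eq_bigr => a _; rewrite /q; ring.
  apply: ler_wpM2l; first exact: sqr_ge0.
  apply: diam => //; exact: pgreedy_policy.
have H1 : Iq <= - (alpha * ((1 - gamma) / Mx * dl)).
  rewrite EIq mulNr lerN2; exact: ler_wpM2l.
have H2 : K * sqdist q pi <= K * (alpha ^+ 2 * (2 * #|S|%:R)) by exact: ler_wpM2l.
have E2 : 2 * gamma * #|A|%:R * #|S|%:R / (1 - gamma) ^+ 3 * alpha ^+ 2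
    = K * (alpha ^+ 2 * (2 * #|S|%:R)) by rewrite /K; ring.
rewrite E2.
have E3 : alpha * ((1 - gamma) / Mx) * dl = alpha * ((1 - gamma) / Mx * dl) by ring.
rewrite E3.
move: Hdes; rewrite -/G -/I' -/K => Hdes.
rewrite /dl; rewrite /dl in H1.
lra.
Qed.

Lemma main rho pistar (pi : nat -> S -> A -> R) :
  is_dist rho ->
  is_optimal P Rc gamma pistar ->
  is_policy (pi 0%N) ->
  (forall k : nat,
     is_proj_Pi
       (fun s a => pi k s a
          - (1 - gamma) ^+ 3 / (2 * gamma * #|A|%:R) * gradV P Rc gamma rho (pi k) s a)
       (pi k.+1)) ->
  forall k : nat, (1 <= k)%N ->
    ((Vrho P Rc gamma rho (pi k) - Vstar P Rc gamma rho)%:E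
     <= (128 * #|S|%:R * #|A|%:R / (k%:R * (1 - gamma) ^+ 5))%:E
        * (ratio_inf (drho P gamma rho pistar) rho
           * ratio_inf (drho P gamma rho pistar) rho))%E.
Proof.
move=> hrho hopt hpi0 hproj k hk.
have [hps hoptv] := hopt.
have hc : 0 < 1 - gamma by rewrite subr_gt0 g1.
have [s0 hs0] := exists_pos _ _ _ (proj2 hrho).
have [a0 _] := exists_pos _ _ _ (proj2 (hpi0 s0)).
have hA : (0 < #|A|)%N by apply/card_gt0P; exists a0.
have hS : (0 < #|S|)%N by apply/card_gt0P; exists s0.
have hpol : forall k, is_policy (pi k).
  by elim=> [|n IH] //; exact: (proj1 (hproj n)).
have hVs : Vrho P Rc gamma rho pistar <= Vstar P Rc gamma rho.
  apply: lb_le_inf; first by exists (Vrho P Rc gamma rho pistar); exists pistar.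
  move=> _ [p hp <-]; apply: ler_sum => s _; apply: ler_wpM2l.
    exact: (proj1 hrho).
  exact: hoptv.
set C := 128 * #|S|%:R * #|A|%:R / (k%:R * (1 - gamma) ^+ 5).
have hC : 0 < C.
  rewrite /C divr_gt0 ?mulr_gt0 ?ltr0n ?exprn_gt0 //.
set Rt := ratio_inf (drho P gamma rho pistar) rho.
set F := fun s => if rho s == 0 then (if drho P gamma rho pistar s == 0 then 1%E else +oo%E)
                  else (drho P gamma rho pistar s / rho s)%:E.
have hF : forall s, (F s <= Rt)%E.
  move=> s; rewrite /Rt /ratio_inf; apply: bigmax_ge; exact: mem_index_enum.
case HR : Rt => [Mx| |]; last first.
- have := hF s0; rewrite HR /F gt_eqF //.
- by rewrite mulyy mulry gtr0_sg // mul1e leey.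
have hdM : forall s, drho P gamma rho pistar s <= Mx * rho s.
  move=> s; have := hF s; rewrite HR /F.
  case: eqP => [->|/eqP hr].
    by case: eqP => [->|_] //; rewrite mulr0.
  rewrite lee_fin => H.
  have hr0 : 0 < rho s by rewrite lt_neqAle eq_sym hr (proj1 hrho).
  by rewrite -ler_pdivrMr.
have hMx : 1 - gamma <= Mx.
  have := hF s0; rewrite HR /F gt_eqF // lee_fin => H; apply: le_trans H.
  by rewrite ler_pdivlMr // (d_ge rho pistar hrho hps s0).
have hMx0 : 0 < Mx by apply: lt_le_trans hMx.
set sS : R := #|S|%:R.
set sA : R := #|A|%:R.
have hsS : 1 <= sS by rewrite /sS ler1n.
have hsA : 1 <= sA by rewrite /sA ler1n.
have hsS0 : 0 < sS by apply: lt_le_trans hsS.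
have hsA0 : 0 < sA by apply: lt_le_trans hsA.
set dl := fun n => Vrho P Rc gamma rho (pi n) - Vrho P Rc gamma rho pistar.
have hdl0 : forall n, 0 <= dl n.
  move=> n; rewrite /dl subr_ge0; apply: ler_sum => s _; apply: ler_wpM2l.
    exact: (proj1 hrho).
  exact: hoptv.
have hdlx : forall n, dl n <= (1 - gamma)^-1.
  move=> n; rewrite /dl.
  have h1 : Vrho P Rc gamma rho (pi n) <= (1 - gamma)^-1.
    rewrite /Vrho; apply: le_trans (_ : \sum_s rho s * (1 - gamma)^-1 <= _).
      apply: ler_sum => s _; apply: ler_wpM2l; first exact: (proj1 hrho).
      exact: V_le.
    by rewrite -mulr_suml (proj2 hrho) mul1r.
  have h2 : 0 <= Vrho P Rc gamma rho pistar.
    apply: sumr_ge0 => s _; apply: mulr_ge0; first exact: (proj1 hrho).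
    exact: V_ge0.
  lra.
set c := (1 - gamma) / Mx.
set D := 2 * gamma * sA * sS / (1 - gamma) ^+ 3.
set b := (1 - gamma) ^+ 5 / (128 * sS * sA * Mx ^+ 2).
have hc0 : 0 < c by rewrite /c divr_gt0.
have hD0 : 0 < D by rewrite /D divr_gt0 ?exprn_gt0 // !mulr_gt0 // g0.
have hb0 : 0 < b by rewrite /b divr_gt0 ?exprn_gt0 // !mulr_gt0 // exprn_gt0.
have hne : [&& 1 - gamma != 0, Mx != 0, sS != 0 & sA != 0].
  by rewrite g1ne !gt_eqF.
have hb4 : b * (4 * D) <= c ^+ 2.
  have E : b * (4 * D) = gamma / 16 * c ^+ 2.
    rewrite /b /D /c; field.
    by rewrite g1ne !gt_eqF // ?ltr0n.
  rewrite E; have hg1 := g1; have hc2 := sqr_ge0 c.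
  have H16 : gamma / 16 <= 1 by lra.
  apply: le_trans (_ : 1 * c ^+ 2 <= _); last by rewrite mul1r.
  exact: ler_wpM2r.
have hbx : b * (1 - gamma)^-1 <= c / 2.
  have E : b * (1 - gamma)^-1 = c / 2 * ((1 - gamma) ^+ 3 / (64 * sS * sA * Mx)).
    rewrite /b /c; field.
    by rewrite g1ne !gt_eqF // ?ltr0n.
  rewrite E; apply: le_trans (_ : c / 2 * 1 <= _); last by rewrite mulr1.
  apply: ler_wpM2l; first by rewrite divr_ge0 // ltW.
  rewrite ler_pdivrMr ?mul1r; last by rewrite !mulr_gt0.
  have hg1 := g1; have hg0 := g0.
  have h3 : (1 - gamma) ^+ 3 <= 1 - gamma.
    have ht : (1 - gamma) ^+ 2 <= 1 by rewrite expr2; nra.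
    by rewrite exprS; apply: le_trans (_ : (1 - gamma) * 1 <= _);
      [apply: ler_wpM2l; [exact: ltW|exact: ht]|rewrite mulr1].
  have h4 : Mx <= 64 * sS * sA * Mx.
    have : 1 <= sS * sA by nra.
    nra.
  lra.
have hstep : forall n, dl n.+1 <= dl n - b * dl n ^+ 2.
  move=> n; apply: (step_real _ _ _ _ _ _ _ (hdl0 n) (hdlx n) hc0 hD0 hb0 hb4 hbx).
  move=> alpha halpha.
  have := one_step rho pistar (pi n) (pi n.+1) Mx alpha hrho hopt (hpol n) hA (hproj n) hMx0 hdM halpha.
  by rewrite /dl /c /D /sA /sS.
have Hk := rec_real _ dl b hb0 hstep k hk.
rewrite -EFinM lee_fin.
apply: le_trans (_ : dl k <= _).
  by rewrite /dl lerD2l lerN2.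
apply: le_trans Hk _.
rewrite le_eqVlt; apply/orP; left; apply/eqP.
rewrite /b /C; field.
by rewrite g1ne !gt_eqF // ?ltr0n.
Qed.

End Markov.

Theorem theorem2 (R : realType) (S A : finType)
  (P : S -> A -> S -> R) (Rc : S -> A -> R) (gamma : R)
  (rho : S -> R) (pistar : S -> A -> R) (pi : nat -> S -> A -> R) :
  (forall s a, is_dist (P s a)) ->
  (forall s a, 0 <= Rc s a <= 1) ->
  0 < gamma < 1 ->
  is_dist rho ->
  is_optimal P Rc gamma pistar ->
  is_policy (pi 0%N) ->
  (forall k : nat,
     is_proj_Pi
       (fun s a => pi k s a
          - (1 - gamma) ^+ 3 / (2 * gamma * #|A|%:R) * gradV P Rc gamma rho (pi k) s a)
       (pi k.+1)) ->
  forall k : nat, (1 <= k)%N ->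
    ((Vrho P Rc gamma rho (pi k) - Vstar P Rc gamma rho)%:E
     <= (128 * #|S|%:R * #|A|%:R / (k%:R * (1 - gamma) ^+ 5))%:E
        * (ratio_inf (drho P gamma rho pistar) rho
           * ratio_inf (drho P gamma rho pistar) rho))%E.
Proof.
move=> hP hR hg.
exact: (main R S A P Rc gamma hP hg hR rho pistar pi).
Qed.
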